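(* Let $1\le r\le s\le t$ and let $u=ABCd$, $v=A'B'C'd'$ be distinct vertices of $E3C(r,s,t)$ with $A=A'$, $C=C'$ and $d=d'$ (any $d\in\{0,1,2\}$). Then there exist $2r+2$ pairwise internally disjoint $u$–$v$ paths in $E3C(r,s,t)$, each of length at most $s+6$.
   Context: The exchanged 3-ary $n$-cube $E3C(r,s,t)$ ($r,s,t\ge1$, $n=r+s+t+1$): vertices are strings written $x=ABCd$ with $A\in\{0,1,2\}^r$, $B\in\{0,1,2\}^s$, $C\in\{0,1,2\}^t$, $d\in\{0,1,2\}$. Two distinct vertices $x=ABCd$, $y=A'B'C'd'$ are adjacent iff one of: (E0) $A=A',B=B',C=C'$ and $d\ne d'$; (E1) $d=d'=0$, $A=A'$, $B=B'$ and $C,C'$ differ in exactly one position; (E2) $d=d'=1$, $A=A'$, $C=C'$ and $B,B'$ differ in exactly one position; (E3) $d=d'=2$, $B=B'$, $C=C'$ and $A,A'$ differ in exactly one position. Paths are internally disjoint if they share no vertices other than their endpoints; length = number of edges. *)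

(* Defs.v *)
From mathcomp Require Import all_boot.
Set Implicit Arguments. Unset Strict Implicit. Unset Printing Implicit Defensive.

Definition word (n : nat) := {ffun 'I_n -> 'I_3}.

Definition differ1 (n : nat) (X Y : word n) : bool :=
  #|[set i : 'I_n | X i != Y i]| == 1.

Definition vtx (r s t : nat) : finType :=
  (word r * word s * word t * 'I_3)%type.

Definition vA r s t (x : vtx r s t) : word r := x.1.1.1.
Definition vB r s t (x : vtx r s t) : word s := x.1.1.2.
Definition vC r s t (x : vtx r s t) : word t := x.1.2.
Definition vd r s t (x : vtx r s t) : 'I_3 := x.2.

Definition e3c_adj (r s t : nat) (x y : vtx r s t) : bool :=
  [|| [&& vA x == vA y, vB x == vB y, vC x == vC y & vd x != vd y]
    , [&& val (vd x) == 0, val (vd y) == 0, vA x == vA y, vB x == vB y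
        & differ1 (vC x) (vC y)]
    , [&& val (vd x) == 1, val (vd y) == 1, vA x == vA y, vC x == vC y
        & differ1 (vB x) (vB y)]
    | [&& val (vd x) == 2, val (vd y) == 2, vB x == vB y, vC x == vC y
        & differ1 (vA x) (vA y)] ].

(* A u-v path is represented by the sequence q of its internal vertices:
   the vertex sequence is u :: q ++ [:: v], consecutive vertices adjacent,
   all vertices distinct. *)
Definition is_path_int (r s t : nat) (u v : vtx r s t) (q : seq (vtx r s t)) : bool :=
  path (@e3c_adj r s t) u (rcons q v) && uniq (u :: rcons q v).

Definition path_length (T : Type) (q : seq T) : nat := (size q).+1.

(* Main.v *)
Require Import Defs.
From mathcomp Require Import all_boot.
From mathcomp Require Import zify.
Set Implicit Arguments. Unset Strict Implicit. Unset Printing Implicit Defensive.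

Definition o0 : 'I_3 := @Ordinal 3 0 isT.
Definition o1 : 'I_3 := @Ordinal 3 1 isT.
Definition o2 : 'I_3 := @Ordinal 3 2 isT.

Definition upd n (X : word n) (i : 'I_n) (c : 'I_3) : word n :=
  [ffun k => if k == i then c else X k].

Lemma differ1P n (X Y : word n) (i : 'I_n) :
  (forall k, (X k != Y k) = (k == i)) -> differ1 X Y.
Proof.
move=> H; rewrite /differ1; apply/cards1P; exists i; apply/setP => k.
by rewrite !inE H.
Qed.

Lemma differ1_sym n (X Y : word n) : differ1 X Y -> differ1 Y X.
Proof.
rewrite /differ1 => H; suff -> : [set i | Y i != X i] = [set i | X i != Y i] by [].
by apply/setP => k; rewrite !inE eq_sym.
Qed.

Lemma differ1_upd n (X : word n) i c : c != X i -> differ1 X (upd X i c).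
Proof.
move=> Hc; apply: (differ1P (i := i)) => k; rewrite ffunE.
by case: (k =P i) => [->|_]; rewrite ?eqxx // eq_sym.
Qed.

Lemma upd_neq n (X : word n) i c : c != X i -> upd X i c != X.
Proof. move=> Hc; apply/eqP => E; have := congr1 (fun f : word n => f i) E; rewrite ffunE eqxx; exact/eqP. Qed.

Lemma upd_inj n (X : word n) i c i' c' : c != X i -> c' != X i' ->
  upd X i c = upd X i' c' -> (i, c) = (i', c').
Proof.
move=> Hc Hc' E.
have := congr1 (fun f : word n => f i) E; rewrite !ffunE eqxx.
case: eqP => [->|Hii] Ec; first by rewrite Ec.
by move: Hc; rewrite Ec eqxx.
Qed.

Section Words.
Variables (s : nat) (B B' : word s).
Hypothesis HBB : B != B'.

Definition dl := [seq i <- enum 'I_s | B i != B' i].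
Definition h := size dl.

Lemma mem_dl i : (i \in dl) = (B i != B' i).
Proof. by rewrite mem_filter mem_enum andbT. Qed.

Lemma uniq_dl : uniq dl.
Proof. by rewrite filter_uniq // enum_uniq. Qed.

Lemma h_gt0 : 0 < h.
Proof.
rewrite /h size_filter -has_count; apply/hasP.
have [i Hi]: exists i, B i != B' i.
  apply/existsP; move: HBB; apply: contraR; rewrite negb_exists => /forallP H.
  by apply/eqP/ffunP => i; move: (H i); rewrite negbK => /eqP.
by exists i; rewrite ?mem_enum.
Qed.

Lemma h_le : h <= s.
Proof. by rewrite /h size_filter (leq_trans (count_size _ _)) // size_enum_ord. Qed.

Definition inP m l p := ((m <= p) && (p < m + l)) || (p + h < m + l).

Definition Wq m l : word s := [ffun i => if inP m l (index i dl) then B' i else B i].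

Lemma notin_dl i : i \notin dl -> B' i = B i.
Proof. by rewrite mem_dl negbK => /eqP. Qed.

Lemma index_dl i : i \in dl -> index i dl < h.
Proof. by rewrite index_mem. Qed.

Lemma Wq0 m : m < h -> Wq m 0 = B.
Proof. move=> Hm; apply/ffunP => i; rewrite ffunE /inP; case: ifP => //; lia. Qed.

Lemma Wqh m : m < h -> Wq m h = B'.
Proof.
move=> Hm; apply/ffunP => i; rewrite ffunE.
case Hi: (i \in dl); last by rewrite notin_dl ?Hi //; case: ifP.
have := index_dl Hi; rewrite /inP; case: ifP => //; lia.
Qed.

Lemma sgt0 : 0 < s.
Proof. by have := h_le; have := h_gt0; lia. Qed.

Lemma Wq_eqP m l m' l' : Wq m l = Wq m' l' ->
  forall p, p < h -> inP m l p = inP m' l' p.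
Proof.
move=> E p Hp; pose x0 := Ordinal sgt0.
have Hin : nth x0 dl p \in dl by rewrite mem_nth.
have := congr1 (fun f : word s => f (nth x0 dl p)) E; rewrite !ffunE index_uniq ?uniq_dl //.
move: Hin; rewrite mem_dl.
by case: (inP m l p); case: (inP m' l' p) => // Hn E2; move: Hn; rewrite E2 eqxx.
Qed.

Lemma Wq_step m l : m < h -> l < h -> differ1 (Wq m l) (Wq m l.+1).
Proof.
move=> Hm Hl; pose x0 := Ordinal sgt0.
pose q := if m + l < h then m + l else m + l - h.
have Hq : q < h by rewrite /q; case: ifP; lia.
apply: (differ1P (i := nth x0 dl q)) => k; rewrite !ffunE.
case Hk: (k \in dl); last first.
  rewrite notin_dl ?Hk //; case: ifP; case: ifP => _ _; rewrite eqxx; apply/esym/negbTE;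
  apply: contraFN Hk => /eqP ->; exact: mem_nth.
have Hp := index_dl Hk.
have -> : (k == nth x0 dl q) = (index k dl == q).
  apply/eqP/eqP => [->|<-]; last by rewrite nth_index.
  by rewrite index_uniq ?uniq_dl.
have : (inP m l (index k dl) != inP m l.+1 (index k dl)) = (index k dl == q).
  rewrite /q /inP; move: Hp; case: ifP => ? ?; apply/idP/idP; lia.
move: Hk; rewrite mem_dl => Hk.
case: (inP m l _); case: (inP m l.+1 _) => /= <-; rewrite ?eqxx //.
 by rewrite eq_sym.
Qed.

Lemma Wq_inj m l l' : m < h -> l <= h -> l' <= h -> Wq m l = Wq m l' -> l = l'.
Proof.
move=> Hm Hl Hl' E; have P := Wq_eqP E.
have key: forall a b, a < b -> b <= h -> (forall p, p < h -> inP m a p = inP m b p) -> False.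
  move=> a b Hab Hb H.
  have := H (if m + a < h then m + a else m + a - h).
  rewrite /inP; case: ifP => ? ; move=> /(_ ltac:(lia)) /eqP; apply/negP; lia.
case: (ltngtP l l') => // Hll'.
- by case: (key _ _ Hll' Hl').
- by case: (key _ _ Hll' Hl) => p Hp; rewrite P.
Qed.

Lemma Wq_cyc m l m' l' : m < h -> m' < h -> 0 < l < h -> 0 < l' < h ->
  Wq m l = Wq m' l' -> m = m'.
Proof.
move=> Hm Hm' Hl Hl' E; have P := Wq_eqP E.
have P1 := P m Hm; have P2 := P m' Hm'.
have P3 := P (if m == 0 then h.-1 else m.-1) ltac:(case: ifP; lia).
have P4 := P (if m' == 0 then h.-1 else m'.-1) ltac:(case: ifP; lia).
move: P1 P2 P3 P4; rewrite /inP.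
case: ifP => /eqP ?; case: ifP => /eqP ? ; move=> /eqP P1 /eqP P2 /eqP P3 /eqP P4; lia.
Qed.

Definition oj (j : 'I_s) := [seq i <- dl | i != j].
Definition V j (c : 'I_3) l : word s :=
  [ffun i => if i == j then c else if index i (oj j) < l then B' i else B i].

Lemma uniq_oj j : uniq (oj j).
Proof. by rewrite filter_uniq // uniq_dl. Qed.

Lemma mem_oj j i : (i \in oj j) = (i != j) && (B i != B' i).
Proof. by rewrite mem_filter mem_dl. Qed.

Lemma size_oj j : size (oj j) <= h.
Proof. by rewrite /h size_filter count_size. Qed.

Section VW.
Variables (j : 'I_s) (c : 'I_3).
Hypotheses (Hc : c != B j) (Hc' : c != B' j).

Lemma V_first : differ1 B (V j c 0).
Proof.
apply: (differ1P (i := j)) => k; rewrite ffunE.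
by case: (k =P j) => [->|_]; rewrite ?eqxx // eq_sym.
Qed.

Lemma V_last : differ1 (V j c (size (oj j))) B'.
Proof.
apply: (differ1P (i := j)) => k; rewrite ffunE.
case: (k =P j) => [->|/eqP Hk]; first by [].
case Hi: (k \in oj j); first by rewrite index_mem Hi eqxx.
move: Hi; rewrite mem_oj Hk /= => /negbFE /eqP ->; by case: ifP => _; rewrite eqxx.
Qed.

Lemma V_step l : l < size (oj j) -> differ1 (V j c l) (V j c l.+1).
Proof.
move=> Hl; pose x0 := Ordinal sgt0.
apply: (differ1P (i := nth x0 (oj j) l)) => k; rewrite !ffunE.
have Hn : nth x0 (oj j) l \in oj j by rewrite mem_nth.
case: (k =P j) => [Ek|/eqP Hk].
  rewrite eqxx; apply/esym/eqP => Ek2; move: Hn; rewrite mem_oj -Ek2 Ek eqxx //.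
case Hi: (k \in oj j); last first.
  move: (Hi); rewrite mem_oj Hk /= => /negbFE /eqP ->.
  case: ifP; case: ifP => _ _; rewrite eqxx; apply/esym/eqP => E; by move: Hn; rewrite -E Hi.
have -> : (k == nth x0 (oj j) l) = (index k (oj j) == l).
  apply/eqP/eqP => [->|<-]; last by rewrite nth_index.
  by rewrite index_uniq ?uniq_oj.
move: Hi; rewrite mem_oj Hk /= => Hb.
case: (ltngtP (index k (oj j)) l) => H.
- by rewrite ltnS ltnW // eqxx.
- by rewrite ltnS leqNgt H /= eqxx.
- by rewrite H ltnSn.
Qed.

Lemma V_nB l : V j c l != B.
Proof. apply/eqP => E; have := congr1 (fun f : word s => f j) E; rewrite ffunE eqxx; exact/eqP. Qed.
Lemma V_nB' l : V j c l != B'.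
Proof. apply/eqP => E; have := congr1 (fun f : word s => f j) E; rewrite ffunE eqxx; exact/eqP. Qed.

Lemma V_inj l l' : l <= size (oj j) -> l' <= size (oj j) -> V j c l = V j c l' -> l = l'.
Proof.
move=> Hl Hl' E; pose x0 := Ordinal sgt0.
have key : forall a b, a < b -> b <= size (oj j) -> V j c a = V j c b -> False.
  move=> a b Hab Hb E2.
  have Hn : nth x0 (oj j) a \in oj j by rewrite mem_nth //; lia.
  have := congr1 (fun f : word s => f (nth x0 (oj j) a)) E2; rewrite !ffunE.
  move: (Hn); rewrite mem_oj => /andP [/negbTE -> Hb'].
  have Ha : a < size (oj j) by lia.
  rewrite index_uniq ?uniq_oj //.
  rewrite ltnn Hab => E3; by move: Hb'; rewrite E3 eqxx.
case: (ltngtP l l') => // H; first by case: (key _ _ H Hl' E).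
by case: (key _ _ H Hl (esym E)).
Qed.
End VW.

Lemma V_Wq j c l m l' : c != B j -> c != B' j -> V j c l != Wq m l'.
Proof.
move=> Hc Hc'; apply/eqP => E; have := congr1 (fun f : word s => f j) E; rewrite !ffunE eqxx.
by case: ifP => _ E2; [move: Hc'|move: Hc]; rewrite E2 eqxx.
Qed.

Lemma V_V j c l j' c' l' : c != B j -> c != B' j -> c' != B j' -> c' != B' j' ->
  V j c l = V j' c' l' -> (j, c) = (j', c').
Proof.
move=> Hc Hc' Hd Hd' E; have := congr1 (fun f : word s => f j) E; rewrite !ffunE eqxx.
case: (j =P j') => [<- -> //|/eqP Hjj].
by case: ifP => _ E2; [move: Hc'|move: Hc]; rewrite E2 eqxx.
Qed.

End Words.

Lemma path_iota (T : Type) (e : rel T) (f : nat -> T) a n :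
  (forall k, a <= k < a + n -> e (f k) (f k.+1)) ->
  path e (f a) [seq f k | k <- iota a.+1 n].
Proof.
elim: n a => [|n IH] a H //=.
rewrite H ?IH //; last by lia.
move=> k Hk; apply: H; lia.
Qed.

Lemma iota_rcons a n : iota a n.+1 = rcons (iota a n) (a + n).
Proof. by rewrite -addn1 iotaD cats1. Qed.

Section Verts.
Variables (r s t : nat).
Implicit Types (x y z : vtx r s t).

Definition ext x (q : seq (vtx r s t)) y := x :: rcons q y.

Lemma mem_ext z x q y : (z \in ext x q y) = [|| z == x, z \in q | z == y].
Proof. by rewrite /ext inE mem_rcons inE; case: (z == x); case: (z == y); case: (z \in q). Qed.

Lemma size_ext x q y : size (ext x q y) = (size q).+2.
Proof. by rewrite /= size_rcons. Qed.

Lemma adjE0 a b c (d d' : 'I_3) : d != d' -> @e3c_adj r s t (a, b, c, d) (a, b, c, d').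
Proof. by move=> H; rewrite /e3c_adj /vA /vB /vC /vd /= !eqxx H. Qed.

Lemma adjB a b b' c : differ1 b b' -> @e3c_adj r s t (a, b, c, o1) (a, b', c, o1).
Proof. by move=> H; rewrite /e3c_adj /vA /vB /vC /vd /= !eqxx H !orbT. Qed.

Lemma adjC a b c c' : differ1 c c' -> @e3c_adj r s t (a, b, c, o0) (a, b, c', o0).
Proof. by move=> H; rewrite /e3c_adj /vA /vB /vC /vd /= !eqxx H !orbT. Qed.

Lemma adjA a a' b c : differ1 a a' -> @e3c_adj r s t (a, b, c, o2) (a', b, c, o2).
Proof. by move=> H; rewrite /e3c_adj /vA /vB /vC /vd /= !eqxx H !orbT. Qed.

Lemma ext_ok x y q x' y' (P : pred (vtx r s t)) :
  is_path_int x y q -> e3c_adj x' x -> e3c_adj y y' ->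
  (forall z, z \in ext x q y -> P z) -> ~~ P x' -> ~~ P y' -> x' != y' ->
  is_path_int x' y' (ext x q y).
Proof.
move=> /andP [Hp Hu] Hx Hy HP Px Py Hxy; apply/andP; split.
  rewrite /ext /= Hx /= rcons_path Hp /= last_rcons Hy //.
have Hx' : x' \notin ext x q y by apply: contra Px => /HP.
have Hy' : y' \notin ext x q y by apply: contra Py => /HP.
rewrite /ext in Hx' Hy' *.
rewrite cons_uniq rcons_uniq Hu Hy' mem_rcons inE negb_or Hxy.
by rewrite Hx'.
Qed.

Variables (A : word r) (B B' : word s) (C : word t).
Hypothesis HBB : B != B'.

Definition liftW (A' : word r) (C' : word t) (X : word s) : vtx r s t := (A', X, C', o1).

Lemma liftW_inj (A' : word r) (C' : word t) : injective (liftW A' C').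
Proof. by move=> X Y [->]. Qed.

Lemma route_ok (A' : word r) (C' : word t) (R : seq (word s)) : path (@differ1 s) B (rcons R B') -> uniq (B :: rcons R B') ->
  is_path_int (liftW A' C' B) (liftW A' C' B') (map (liftW A' C') R).
Proof.
move=> Hp Hu; apply/andP; split.
  rewrite -map_rcons path_map; apply: sub_path Hp => X Y /=; exact: adjB.
by rewrite -map_rcons -(map_cons (liftW A' C')) map_inj_uniq //; exact: liftW_inj.
Qed.

Definition hh := h B B'.

Definition base (A' : word r) (C' : word t) m := map (liftW A' C') [seq Wq B B' m l | l <- iota 1 hh.-1].

Lemma base_full m : m < hh ->
  B :: rcons [seq Wq B B' m l | l <- iota 1 hh.-1] B' = [seq Wq B B' m l | l <- iota 0 hh.+1].
Proof.
move=> Hm; have H0 := h_gt0 HBB.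
have -> : iota 0 hh.+1 = 0 :: iota 1 hh by [].
rewrite map_cons (Wq0 HBB Hm); congr (_ :: _).
rewrite -[in X in rcons _ X](Wqh HBB Hm) -map_rcons.
have -> : rcons (iota 1 hh.-1) (h B B') = iota 1 hh.
  by rewrite /hh; move: H0; case: (h B B') => // n _; rewrite iota_rcons add1n.
done.
Qed.

Lemma base_ok A' C' m : m < hh ->
  is_path_int (liftW A' C' B) (liftW A' C' B') (base A' C' m).
Proof.
move=> Hm; have H0 := h_gt0 HBB; apply: route_ok.
  rewrite -[X in path _ X _](Wq0 HBB Hm).
  have -> : rcons [seq Wq B B' m l | l <- iota 1 hh.-1] B' = [seq Wq B B' m l | l <- iota 1 hh].
    by have := base_full Hm => /= [[]].
  apply: path_iota => k Hk; apply: (Wq_step HBB) => //; rewrite /hh in Hk; lia.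
rewrite base_full // map_inj_in_uniq ?iota_uniq // => a b.
rewrite !mem_iota => Ha Hb; apply: (Wq_inj HBB Hm) => //; rewrite /hh in Ha Hb; lia.
Qed.

Lemma mem_base z A' C' m : z \in base A' C' m ->
  [/\ vA z = A', vC z = C', vd z = o1 &
     exists2 l, 0 < l < hh & vB z = Wq B B' m l].
Proof.
case/mapP => X /mapP [l Hl ->] ->; split => //; exists l => //.
move: Hl; rewrite mem_iota; lia.
Qed.

Lemma size_base A' C' m : size (base A' C' m) = hh.-1.
Proof. by rewrite !size_map size_iota. Qed.

Definition Up j c :=
  map (liftW A C) [seq V B B' j c l | l <- iota 0 (size (oj B B' j)).+1].

Lemma Up_ok j c : c != B j -> c != B' j ->
  is_path_int (liftW A C B) (liftW A C B') (Up j c).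
Proof.
move=> Hc Hc'; apply: route_ok.
  rewrite rcons_path; apply/andP; split.
    rewrite /= V_first //=; apply: path_iota => k Hk; apply: (V_step HBB); move: Hk; rewrite add0n => /andP [_ Hk2]; exact: Hk2.
  rewrite (iota_rcons 0 (size (oj B B' j))) map_rcons last_rcons; exact: V_last.
set L := [seq V B B' j c l | l <- iota 0 (size (oj B B' j)).+1].
have nB : B \notin L by apply/mapP => [[l _]] /eqP; rewrite eq_sym (negbTE (V_nB _ Hc l)).
have nB' : B' \notin L by apply/mapP => [[l _]] /eqP; rewrite eq_sym (negbTE (V_nB' _ Hc' l)).
rewrite cons_uniq rcons_uniq mem_rcons in_cons negb_or HBB nB nB' /L.
rewrite map_inj_in_uniq ?iota_uniq // => a b.
rewrite !mem_iota => Ha Hb; apply: (V_inj HBB) => //; lia.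
Qed.

Lemma mem_Up z j c : z \in Up j c ->
  [/\ vA z = A, vC z = C, vd z = o1 & exists l, vB z = V B B' j c l].
Proof. by case/mapP => X /mapP [l Hl ->] ->; split => //; exists l. Qed.

Lemma size_Up j c : size (Up j c) <= hh.+1.
Proof. by rewrite !size_map size_iota ltnS size_oj. Qed.


Definition mid (A' : word r) (C' : word t) := ext (liftW A' C' B) (base A' C' 0) (liftW A' C' B').
Definition shiftP (e : 'I_3) (A' : word r) (C' : word t) :=
  ext (A', B, C', e) (mid A' C') (A', B', C', e).
Definition viaP (e : 'I_3) (A' : word r) (C' : word t) :=
  ext (A, B, C, e) (shiftP e A' C') (A, B', C, e).

Lemma mem_mid z A' C' : z \in mid A' C' -> [/\ vA z = A', vC z = C' & vd z = o1].
Proof.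
rewrite mem_ext => /or3P [/eqP ->|/mem_base [] //|/eqP ->]; by [].
Qed.

Lemma mem_shift z e A' C' : z \in shiftP e A' C' ->
  [/\ vA z = A', vC z = C' & (vd z = e \/ vd z = o1)].
Proof.
rewrite mem_ext => /or3P [/eqP ->|/mem_mid [? ? ?] //|/eqP ->]; [by split; auto|by split; auto|by split; auto].
Qed.

Lemma mem_via z e A' C' : z \in viaP e A' C' ->
  [/\ vA z = A, vC z = C & vd z = e] \/
  [/\ vA z = A', vC z = C' & (vd z = e \/ vd z = o1)].
Proof.
rewrite mem_ext => /or3P [/eqP ->|/mem_shift H|/eqP ->]; by [left|right|left].
Qed.

Lemma hh0 : 0 < hh. Proof. exact: h_gt0 HBB. Qed.

Lemma mid_ok A' C' d : d != o1 -> is_path_int (A', B, C', d) (A', B', C', d) (mid A' C').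
Proof.
move=> Hd; apply: (ext_ok (P := fun z => vd z == o1)).
- exact: (base_ok A' C' hh0).
- by apply: adjE0.
- by apply: adjE0; rewrite eq_sym.
- by move=> z /mem_mid [_ _ ->].
- by [].
- by [].
- by apply/eqP => [[]] /eqP; rewrite (negbTE HBB).
Qed.

Lemma shift_ok e A' C' : e != o1 -> (A', C') != (A, C) ->
  e3c_adj (A, B, C, e) (A', B, C', e) -> e3c_adj (A', B', C', e) (A, B', C, e) ->
  is_path_int (A, B, C, e) (A, B', C, e) (shiftP e A' C').
Proof.
move=> He Hne H1 H2; apply: (ext_ok (P := fun z => (vA z == A') && (vC z == C'))).
- exact: mid_ok.
- exact: H1.
- exact: H2.
- by move=> z; rewrite -/(shiftP e A' C') => /mem_shift [-> -> _]; rewrite !eqxx.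
- by apply: contra Hne; rewrite /vA /vC /= => /andP [/eqP <- /eqP <-].
- by apply: contra Hne; rewrite /vA /vC /= => /andP [/eqP <- /eqP <-].
- by apply/eqP => [[]] /eqP; rewrite (negbTE HBB).
Qed.

Lemma via_ok d e A' C' : d != e -> e != o1 -> (A', C') != (A, C) ->
  e3c_adj (A, B, C, e) (A', B, C', e) -> e3c_adj (A', B', C', e) (A, B', C, e) ->
  is_path_int (A, B, C, d) (A, B', C, d) (viaP e A' C').
Proof.
move=> Hde He Hne H1 H2;
  apply: (ext_ok (P := fun z => (vd z == e) || ((vA z, vC z) == (A', C')))).
- exact: shift_ok.
- by apply: adjE0.
- by apply: adjE0; rewrite eq_sym.
- move=> z; rewrite -/(viaP e A' C') => /mem_via [[_ _ ->]|[-> -> _]]; by rewrite !eqxx ?orbT.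
- by rewrite /= negb_or Hde eq_sym Hne.
- by rewrite /= negb_or Hde eq_sym Hne.
- by apply/eqP => [[]] /eqP; rewrite (negbTE HBB).
Qed.

Lemma size_mid A' C' : size (mid A' C') = hh.+1.
Proof. by rewrite size_ext size_base prednK // hh0. Qed.
Lemma size_shift e A' C' : size (shiftP e A' C') = hh.+1.+2.
Proof. by rewrite size_ext size_mid. Qed.
Lemma size_via e A' C' : size (viaP e A' C') = hh.+1.+2.+2.
Proof. by rewrite size_ext size_shift. Qed.

End Verts.

Definition disj (T : finType) (p q : seq T) := [disjoint p & q].

Lemma disjW (T : finType) (p q : seq T) :
  (forall z, z \in p -> z \in q -> False) -> disj p q.
Proof.
move=> H; rewrite /disj /disjoint; apply/pred0P => z /=.
by apply/negbTE/negP => /andP [Hp Hq]; exact: (H z Hp Hq).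
Qed.

Lemma pw_map (T : finType) (I : eqType) (F : I -> seq T) (l : seq I) :
  uniq l -> {in l &, forall a b, a != b -> disj (F a) (F b)} ->
  pairwise (@disj T) (map F l).
Proof.
elim: l => //= a l IH /andP [Ha Hu] H; apply/andP; split.
  apply/allP => q /mapP [b Hb ->]; apply: H; rewrite ?inE ?eqxx ?Hb ?orbT //.
  by apply: contraNneq Ha => ->.
by apply: IH => // x y Hx Hy; apply: H; rewrite inE ?Hx ?Hy orbT.
Qed.

Lemma uniq_pw (T : finType) (L : seq (seq T)) :
  pairwise (@disj T) L -> all (fun q => q != [::]) L -> uniq L.
Proof.
elim: L => //= p L IH /andP [Hp HL] /andP [Hn Ha]; rewrite IH // andbT.
apply/negP => Hin; have D := allP Hp p Hin; rewrite /disj in D.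
case: p Hn D {Hp Hin} => // x p _ D.
by have := disjointFr D (mem_head x p); rewrite mem_head.
Qed.

Lemma uniq_pw1 (T : finType) (L : seq (seq T)) :
  pairwise (@disj T) L -> all (fun q => q != [::]) (behead L) -> uniq L.
Proof.
case: L => //= p L /andP [Hp HL] Ha; rewrite uniq_pw // andbT.
apply/negP => Hin; have D := allP Hp p Hin; have N := allP Ha p Hin; rewrite /disj in D.
case: p N D {Hp Hin} => // x p _ D.
by have := disjointFr D (mem_head x p); rewrite mem_head.
Qed.

Lemma finish r s t (u v : vtx r s t) (L : seq (seq (vtx r s t))) n :
  n <= size L -> all (fun q => is_path_int u v q && (path_length q <= s + 6)) L ->
  pairwise (@disj _) L -> all (fun q => q != [::]) (behead L) ->
  exists ps : seq (seq (vtx r s t)),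
    [/\ size ps = n,
        uniq ps,
        all (fun q => is_path_int u v q && (path_length q <= s + 6)) ps &
        forall i j : nat, i < size ps -> j < size ps -> i != j ->
          [disjoint nth [::] ps i & nth [::] ps j]].
Proof.
move=> Hn Hall Hpw Hne; exists (take n L); split.
- exact: size_takel.
- by apply: take_uniq; apply: uniq_pw1.
- by apply/allP => q /mem_take; apply: (allP Hall).
have Hpt : pairwise (@disj _) (take n L).
  by move: Hpw; rewrite -{1}(cat_take_drop n L) pairwise_cat => /and3P [].
move=> i j Hi Hj Hij; case: (ltngtP i j) Hij => // H _.
- by move/pairwiseP: Hpt => /(_ [::] i j Hi Hj H).
- by rewrite disjoint_sym; move/pairwiseP: Hpt => /(_ [::] j i Hj Hi H).
Qed.

Lemma all_behead (T : Type) (P : pred T) (L : seq T) : all P L -> all P (behead L).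
Proof. by case: L => //= x l /andP []. Qed.

Definition alt (x : 'I_3) : 'I_3 := if x == o0 then o1 else o0.
Lemma alt_neq x : alt x != x.
Proof. by rewrite /alt; case: (x =P o0) => [->|/eqP]; rewrite // eq_sym. Qed.

Definition idx n (X : word n) :=
  [seq (i, c) | i <- enum 'I_n, c <- [seq c <- enum 'I_3 | c != X i]].

Lemma mem_idx n (X : word n) p : p \in idx X -> p.2 != X p.1.
Proof. by case/allpairsPdep => i [c [_ ]]; rewrite mem_filter => /andP [H _] ->. Qed.

Lemma uniq_idx n (X : word n) : uniq (idx X).
Proof.
apply: allpairs_uniq_dep; first exact: enum_uniq.
  by move=> i _; rewrite filter_uniq // enum_uniq.
by move=> [x1 y1] [x2 y2] _ _ /= [-> ->].
Qed.

Lemma enum3 : enum 'I_3 = [:: o0; o1; o2].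
Proof. by apply: (inj_map val_inj); rewrite val_enum_ord. Qed.

Lemma cnt2 (x : 'I_3) : size [seq c <- enum 'I_3 | c != x] = 2.
Proof. rewrite enum3; by case: x => [[|[|[|]]] ?]. Qed.

Lemma cnt1 (x y : 'I_3) : size [seq c <- enum 'I_3 | (c != x) && (c != y)] + (x != y) = 2.
Proof. rewrite enum3; by case: x => [[|[|[|]]] ?] //; case: y => [[|[|[|]]] ?]. Qed.

Lemma size_idx n (X : word n) : size (idx X) = 2 * n.
Proof.
rewrite size_allpairs_dep; transitivity (2 * size (enum 'I_n)); last by rewrite size_enum_ord.
elim: (enum 'I_n) => //= i l ->; rewrite cnt2; lia.
Qed.

Definition idxU s (B B' : word s) :=
  [seq (j, c) | j <- enum 'I_s, c <- [seq c <- enum 'I_3 | (c != B j) && (c != B' j)]].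

Lemma mem_idxU s (B B' : word s) p : p \in idxU B B' -> (p.2 != B p.1) && (p.2 != B' p.1).
Proof. by case/allpairsPdep => i [c [_ ]]; rewrite mem_filter => /andP [H _] ->. Qed.

Lemma uniq_idxU s (B B' : word s) : uniq (idxU B B').
Proof.
apply: allpairs_uniq_dep; first exact: enum_uniq.
  by move=> i _; rewrite filter_uniq // enum_uniq.
by move=> [x1 y1] [x2 y2] _ _ /= [-> ->].
Qed.

Lemma size_idxU s (B B' : word s) : size (idxU B B') + h B B' = 2 * s.
Proof.
rewrite size_allpairs_dep /h /dl size_filter; transitivity (2 * size (enum 'I_s)); last by rewrite size_enum_ord.
elim: (enum 'I_s) => //= i l IH; move: (cnt1 (B i) (B' i)).
case: (B i != B' i) => /= H; lia.
Qed.

Section Main.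
Variables (r s t : nat) (A : word r) (B B' : word s) (C : word t).
Hypothesis HBB : B != B'.
Variables (iA : 'I_r) (iC : 'I_t).
Hypotheses (Hrs : r <= s) (Hst : s <= t).

Let A0 := upd A iA (alt (A iA)).
Let C0 := upd C iC (alt (C iC)).
Let HA0 : A0 != A := upd_neq (alt_neq _).
Let HC0 : C0 != C := upd_neq (alt_neq _).
Let hle : hh B B' <= s := h_le B B'.

Lemma neqAC (A1 : word r) (C1 : word t) : (A1 != A) || (C1 != C) -> (A1, C1) != (A, C).
Proof. by case/orP => H; apply/eqP => [[E1 E2]]; move: H; rewrite ?E1 ?E2 eqxx. Qed.

Definition Goal (d : 'I_3) := exists ps : seq (seq (vtx r s t)),
    [/\ size ps = (2 * r + 2)%N,
        uniq ps,
        all (fun q => is_path_int (A, B, C, d) (A, B', C, d) q && (path_length q <= s + 6)) ps &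
        forall i j : nat, i < size ps -> j < size ps -> i != j ->
          [disjoint nth [::] ps i & nth [::] ps j]].

Lemma case0 : Goal o0.
Proof.
pose L0 := [seq shiftP B B' o0 A (upd C p.1 p.2) | p <- idx C] ++
           [:: mid B B' A C; viaP A B B' C o2 A0 C].
apply: (finish (L := L0)).
- by rewrite size_cat size_map size_idx /=; lia.
- rewrite all_cat /= !andbT; apply/and3P; split.
  + apply/allP => q /mapP [[i c] /mem_idx /= Hc ->]; apply/andP; split.
      apply: shift_ok => //; first by apply: neqAC; rewrite upd_neq ?orbT.
        exact/adjC/differ1_upd.
      exact/adjC/differ1_sym/differ1_upd.
    by rewrite /path_length size_shift; lia.
  + rewrite (mid_ok HBB A C (d := o0)) //= /path_length size_mid; lia.
  + rewrite via_ok //=.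
      by rewrite /path_length size_via; lia.
    - by apply: neqAC; rewrite HA0.
    - exact/adjA/differ1_upd/alt_neq.
    - exact/adjA/differ1_sym/differ1_upd/alt_neq.
- rewrite pairwise_cat pairwise2; apply/and3P; split.
  + apply/allrelP => q q' /mapP [[i c] /mem_idx /= Hc ->].
    rewrite !inE => /orP [] /eqP ->; apply: disjW => z /(mem_shift HBB) [_ E1 _].
      by move=> /(mem_mid HBB) [_ E2 _]; move: (upd_neq Hc); rewrite -E1 E2 eqxx.
    move=> /(mem_via HBB) [[_ E2 _]|[_ E2 _]]; by move: (upd_neq Hc); rewrite -E1 E2 eqxx.
  + apply: pw_map; first exact: uniq_idx.
    move=> [i c] [i' c'] /mem_idx /= Hc /mem_idx /= Hc' Hne; apply: disjW => z.
    move=> /(mem_shift HBB) [_ E1 _] /(mem_shift HBB) [_ E2 _].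
    by move: Hne; rewrite (upd_inj Hc Hc' (etrans (esym E1) E2)) eqxx.
  + apply: disjW => z /(mem_mid HBB) [E1 _ E3] /(mem_via HBB) [[_ _ E4]|[E2 _ _]].
      by move: E4; rewrite E3.
    by move: HA0; rewrite -E2 E1 eqxx.
- apply: all_behead; rewrite all_cat /= andbT.
  by apply/allP => q /mapP [p _ ->].
Qed.

Lemma case2 : Goal o2.
Proof.
pose L2 := [seq shiftP B B' o2 (upd A p.1 p.2) C | p <- idx A] ++
           [:: mid B B' A C; viaP A B B' C o0 A C0].
apply: (finish (L := L2)).
- by rewrite size_cat size_map size_idx /=; lia.
- rewrite all_cat /= !andbT; apply/and3P; split.
  + apply/allP => q /mapP [[i c] /mem_idx /= Hc ->]; apply/andP; split.
      apply: shift_ok => //; first by apply: neqAC; rewrite upd_neq.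
        exact/adjA/differ1_upd.
      exact/adjA/differ1_sym/differ1_upd.
    by rewrite /path_length size_shift; lia.
  + rewrite (mid_ok HBB A C (d := o2)) //= /path_length size_mid; lia.
  + rewrite via_ok //=.
      by rewrite /path_length size_via; lia.
    - by apply: neqAC; rewrite HC0 orbT.
    - exact/adjC/differ1_upd/alt_neq.
    - exact/adjC/differ1_sym/differ1_upd/alt_neq.
- rewrite pairwise_cat pairwise2; apply/and3P; split.
  + apply/allrelP => q q' /mapP [[i c] /mem_idx /= Hc ->].
    rewrite !inE => /orP [] /eqP ->; apply: disjW => z /(mem_shift HBB) [E1 _ _].
      by move=> /(mem_mid HBB) [E2 _ _]; move: (upd_neq Hc); rewrite -E1 E2 eqxx.
    move=> /(mem_via HBB) [[E2 _ _]|[E2 _ _]]; by move: (upd_neq Hc); rewrite -E1 E2 eqxx.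
  + apply: pw_map; first exact: uniq_idx.
    move=> [i c] [i' c'] /mem_idx /= Hc /mem_idx /= Hc' Hne; apply: disjW => z.
    move=> /(mem_shift HBB) [E1 _ _] /(mem_shift HBB) [E2 _ _].
    by move: Hne; rewrite (upd_inj Hc Hc' (etrans (esym E1) E2)) eqxx.
  + apply: disjW => z /(mem_mid HBB) [_ E1 E3] /(mem_via HBB) [[_ _ E4]|[_ E2 _]].
      by move: E4; rewrite E3.
    by move: HC0; rewrite -E2 E1 eqxx.
- apply: all_behead; rewrite all_cat /= andbT.
  by apply/allP => q /mapP [p _ ->].
Qed.

Lemma case1 : Goal o1.
Proof.
have H0 : 0 < hh B B' := hh0 HBB.
pose Fq := [seq base B B' A C m | m <- iota 0 (hh B B')].
pose Fu := [seq Up A B B' C p.1 p.2 | p <- idxU B B'].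
pose L1 := Fq ++ (Fu ++ [:: viaP A B B' C o0 A C0; viaP A B B' C o2 A0 C]).
have via0_ok : is_path_int (A, B, C, o1) (A, B', C, o1) (viaP A B B' C o0 A C0).
  apply: via_ok => //; first by apply: neqAC; rewrite HC0 orbT.
    exact/adjC/differ1_upd/alt_neq.
  exact/adjC/differ1_sym/differ1_upd/alt_neq.
have via2_ok : is_path_int (A, B, C, o1) (A, B', C, o1) (viaP A B B' C o2 A0 C).
  apply: via_ok => //; first by apply: neqAC; rewrite HA0.
    exact/adjA/differ1_upd/alt_neq.
  exact/adjA/differ1_sym/differ1_upd/alt_neq.
have layerQU : forall q z, q \in Fq ++ Fu -> z \in q -> [/\ vA z = A, vC z = C & vd z = o1].
  move=> q z; rewrite mem_cat => /orP [] /mapP [x _ ->].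
    by move=> /(mem_base HBB) [].
  by move=> /mem_Up [].
have Hvia : forall q z, q \in [:: viaP A B B' C o0 A C0; viaP A B B' C o2 A0 C] ->
     z \in q -> vA z = A -> vC z = C -> vd z = o1 -> False.
  move=> q z; rewrite !inE => /orP [] /eqP -> /(mem_via HBB) [[E1 E2 E3]|[E1 E2 E3]] F1 F2 F3.
  - by move: E3; rewrite F3.
  - by move: HC0; rewrite -E2 F2 eqxx.
  - by move: E3; rewrite F3.
  - by move: HA0; rewrite -E1 F1 eqxx.
apply: (finish (L := L1)).
- rewrite !size_cat !size_map size_iota /hh /=; have := size_idxU B B'; set k := size (idxU B B'); set k2 := h B B'.
clearbody k k2; move=> E; lia.
- rewrite !all_cat /= !andbT; apply/and4P; split.
  + apply/allP => q /mapP [m]; rewrite mem_iota => /andP [_ Hm] ->; apply/andP; split.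
      exact: (base_ok HBB A C (m := m)).
    by rewrite /path_length size_base; lia.
  + apply/allP => q /mapP [[j c] /mem_idxU /= /andP [Hc Hc'] ->]; apply/andP; split.
      exact: (Up_ok A C HBB Hc Hc').
    rewrite /path_length; have := size_Up A B B' C j c; rewrite /hh; move: (size _) => k E.
    have := h_le B B'; lia.
  + by rewrite via0_ok /path_length size_via; lia.
  + by rewrite via2_ok /path_length size_via; lia.
- rewrite pairwise_cat; apply/and3P; split.
  { rewrite (allrel_catr (@disj _)); apply/andP; split.
  + apply/allrelP => q q' Hq /mapP [[j c] /mem_idxU /= /andP [Hc Hc'] ->].
    move: Hq => /mapP [m _ ->]; apply: disjW => z.
    move=> /(mem_base HBB) [_ _ _ [l _ E1]] /mem_Up [_ _ _ [l' E2]].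
    by move: (V_Wq l' m l Hc Hc'); rewrite -E2 E1 eqxx.
  + apply/allrelP => q q' Hq Hq'; apply: disjW => z Hz Hz'.
    have Hq2 : q \in Fq ++ Fu by rewrite mem_cat Hq.
    have [E1 E2 E3] := layerQU q z Hq2 Hz.
    exact: (Hvia q' z Hq' Hz' E1 E2 E3). }
  + apply: pw_map; first exact: iota_uniq.
    move=> m m'; rewrite !mem_iota => /andP [_ Hm] /andP [_ Hm'] Hne; apply: disjW => z.
    move=> /(mem_base HBB) [_ _ _ [l Hl E1]] /(mem_base HBB) [_ _ _ [l' Hl' E2]].
    by move: Hne; rewrite (Wq_cyc HBB Hm Hm' Hl Hl' (etrans (esym E1) E2)) eqxx.
  rewrite pairwise_cat pairwise2; apply/and3P; split.
  + apply/allrelP => q q' Hq Hq'; apply: disjW => z Hz Hz'.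
    have Hq2 : q \in Fq ++ Fu by rewrite mem_cat Hq orbT.
    have [E1 E2 E3] := layerQU q z Hq2 Hz.
    exact: (Hvia q' z Hq' Hz' E1 E2 E3).
  + apply: pw_map; first exact: uniq_idxU.
    move=> [j c] [j' c'] /mem_idxU /= /andP [Hc Hc'] /mem_idxU /= /andP [Hd Hd'] Hne.
    apply: disjW => z /mem_Up [_ _ _ [l E1]] /mem_Up [_ _ _ [l' E2]].
    by move: Hne; rewrite (V_V Hc Hc' Hd Hd' (etrans (esym E1) E2)) eqxx.
  + apply: disjW => z /(mem_via HBB) [[E1 E2 E3]|[E1 E2 E3]] /(mem_via HBB) [[F1 F2 F3]|[F1 F2 F3]].
    * by move: E3; rewrite F3.
    * by move: HA0; rewrite -F1 E1 eqxx.
    * by move: HC0; rewrite -E2 F2 eqxx.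
    * by move: HA0; rewrite -F1 E1 eqxx.
- rewrite /L1 /Fq; move: H0; case E: (hh B B') => // [n] _.
  rewrite /= !all_cat /= andbT; apply/andP; split.
    apply/allP => q /mapP [m]; rewrite mem_iota => Hm ->.
    by rewrite -size_eq0 size_base E; lia.
  by apply/allP => q /mapP [p _ ->].
Qed.
End Main.

Theorem lemma8 (r s t : nat) (u v : vtx r s t) :
  1 <= r -> r <= s -> s <= t ->
  u != v -> vA u = vA v -> vC u = vC v -> vd u = vd v ->
  exists ps : seq (seq (vtx r s t)),
    [/\ size ps = (2 * r + 2)%N,
        uniq ps,
        all (fun q => is_path_int u v q && (path_length q <= s + 6)) ps &
        forall i j : nat, i < size ps -> j < size ps -> i != j ->
          [disjoint nth [::] ps i & nth [::] ps j]].
Proof.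
move=> Hr Hrs Hst.
case: u => [[[a b] c] d]; case: v => [[[a' b'] c'] d'] Huv.
rewrite /vA /vC /vd /= => HA HC Hd; subst a' c' d'.
have HBB : b != b' by apply: contraNneq Huv => ->.
have Ht : 0 < t by lia.
pose iA : 'I_r := Ordinal Hr; pose iC : 'I_t := Ordinal Ht.
clear Huv; case: d => [[|[|[|k]]] Hk] //.
- have -> : Ordinal Hk = o0 by apply/val_inj.
  exact: (case0 a c HBB iA iC Hrs Hst).
- have -> : Ordinal Hk = o1 by apply/val_inj.
  exact: (case1 a c HBB iA iC Hrs Hst).
- have -> : Ordinal Hk = o2 by apply/val_inj.
  exact: (case2 a c HBB iA iC Hrs Hst).
Qed.
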